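(* Let $H_1,H_2$ be separable Hilbert spaces, $K\in B(H_1)$, $L\in B(H_2)$, and $\{x_n\oplus y_n\}_{n\geqslant1}\subset H_1\oplus H_2$. (i) If $K=0$ and $L\neq0$, then $\{x_n\oplus y_n\}_{n\geqslant1}$ is a $K\oplus L$-orthonormal basis if and only if $x_n=0$ for all $n\geqslant1$ and $\{y_n\}_{n\geqslant1}$ is an $L$-orthonormal basis for $H_2$. (ii) If $K\neq0$ and $L=0$, then $\{x_n\oplus y_n\}_{n\geqslant1}$ is a $K\oplus L$-orthonormal basis if and only if $y_n=0$ for all $n\geqslant1$ and $\{x_n\}_{n\geqslant1}$ is a $K$-orthonormal basis for $H_1$. (iii) If $K\neq0$, $L\neq0$ and $\{x_n\oplus y_n\}_{n\geqslant1}$ is a $K\oplus L$-orthonormal basis, then: (a) $\{K^*(x_n)\oplus L^*(y_n)\}_{n\geqslant1}$ is the unique $K\oplus L$-dual frame to $\{x_n\oplus y_n\}_{n\geqslant1}$; (b) $\{x_n\}_{n\geqslant1}$ is a $K$-frame for $H_1$ which is not $K$-minimal, and $\{K^*(x_n)\}_{n\geqslant1}$ is a $K$-dual frame to it; (c) $\{y_n\}_{n\geqslant1}$ is an $L$-frame for $H_2$ which is not $L$-minimal, and $\{L^*(y_n)\}_{n\geqslant1}$ is an $L$-dual frame to it.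
   Context: $H_1\oplus H_2$ is the Hilbert space of pairs $x\oplus y$ with inner product $\langle x\oplus y,a\oplus b\rangle=\langle x,a\rangle+\langle y,b\rangle$; $(K\oplus L)(x\oplus y)=K(x)\oplus L(y)$. For a Hilbert space $H$ and $K\in B(H)$: $\{z_n\}_{n\geqslant1}$ is a $K$-frame if there are $A,B>0$ with $A\|K^*z\|^2\leq\sum_n|\langle z,z_n\rangle|^2\leq B\|z\|^2$ for all $z\in H$; it is a Parseval $K$-frame if $\|K^*z\|^2=\sum_n|\langle z,z_n\rangle|^2$ for all $z\in H$. A $K$-orthonormal basis is a sequence that is an orthonormal system and a Parseval $K$-frame. A $K$-dual frame to a $K$-frame $\{z_n\}$ is a Bessel sequence $\{f_n\}$ with $Kz=\sum_n\langle z,f_n\rangle z_n$ for all $z\in H$. A $K$-frame is $K$-minimal if its synthesis operator $T:\ell^2\to H$, $T(\{a_n\})=\sum_na_nz_n$, is injective. *)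

(* Defs.v *)
From mathcomp Require Import all_boot all_order all_algebra.
From mathcomp Require Import all_classical all_reals all_analysis.
From mathcomp Require Import complex.
Set Implicit Arguments. Unset Strict Implicit. Unset Printing Implicit Defensive.
Import Order.TTheory GRing.Theory Num.Theory numFieldNormedType.Exports.
Local Open Scope classical_set_scope.
Local Open Scope ring_scope.
Local Open Scope complex_scope.

Section Hilbert.
Variable R : realType.

Definition cnorm2 (c : R[i]) : R := (complex.Re c) ^+ 2 + (complex.Im c) ^+ 2.

Variable H : lmodType R[i].
Implicit Types (ip : H -> H -> R[i]).

Definition is_inner_product ip : Prop :=
  [/\ (forall (a : R[i]) (x y z : H), ip (a *: x + y) z = a * ip x z + ip y z),
      (forall x y : H, ip y x = (ip x y)^*),
      (forall x : H, 0 <= ip x x) &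
      (forall x : H, ip x x = 0 -> x = 0)].

Definition hnorm ip (x : H) : R := Num.sqrt (complex.Re (ip x x)).

Definition hcvg ip (s : nat -> H) (l : H) : Prop :=
  (fun n => hnorm ip (s n - l)) @ \oo --> (0 : R).

Definition hcauchy ip (s : nat -> H) : Prop :=
  forall e : R, 0 < e -> exists N : nat,
    forall m n : nat, (N <= m)%N -> (N <= n)%N -> hnorm ip (s m - s n) < e.

Definition is_hilbert ip : Prop :=
  is_inner_product ip /\
  (forall s : nat -> H, hcauchy ip s -> exists l : H, hcvg ip s l).

Definition separable ip : Prop :=
  exists d : nat -> H, forall (x : H) (e : R), 0 < e -> exists n, hnorm ip (x - d n) < e.

Definition bounded_op ip (K : H -> H) : Prop :=
  (forall (a : R[i]) (x y : H), K (a *: x + y) = a *: K x + K y) /\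
  exists M : R, forall x : H, hnorm ip (K x) <= M * hnorm ip x.

Definition is_adjoint ip (K Kadj : H -> H) : Prop :=
  forall x y : H, ip (K x) y = ip x (Kadj y).

Definition frame_sum ip (zs : nat -> H) (z : H) : \bar R :=
  (\sum_(0 <= n <oo) (cnorm2 (ip z (zs n)))%:E)%E.

Definition K_frame ip (Kadj : H -> H) (zs : nat -> H) : Prop :=
  exists A B : R, [/\ 0 < A, 0 < B &
    forall z : H, ((A * hnorm ip (Kadj z) ^+ 2)%:E <= frame_sum ip zs z)%E /\
                  (frame_sum ip zs z <= (B * hnorm ip z ^+ 2)%:E)%E].

Definition parseval_K_frame ip (Kadj : H -> H) (zs : nat -> H) : Prop :=
  forall z : H, (hnorm ip (Kadj z) ^+ 2)%:E = frame_sum ip zs z.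

Definition orthonormal_system ip (zs : nat -> H) : Prop :=
  forall n m : nat, ip (zs n) (zs m) = (if n == m then 1 else 0).

Definition K_orthonormal_basis ip (Kadj : H -> H) (zs : nat -> H) : Prop :=
  orthonormal_system ip zs /\ parseval_K_frame ip Kadj zs.

Definition bessel ip (fs : nat -> H) : Prop :=
  exists B : R, 0 < B /\ forall z : H, (frame_sum ip fs z <= (B * hnorm ip z ^+ 2)%:E)%E.

Definition K_dual_frame ip (K : H -> H) (zs fs : nat -> H) : Prop :=
  bessel ip fs /\
  forall z : H, hcvg ip (fun N => \sum_(0 <= n < N) ip z (fs n) *: zs n) (K z).

Definition l2seq (a : nat -> R[i]) : Prop :=
  (\sum_(0 <= n <oo) (cnorm2 (a n))%:E < +oo)%E.

Definition synthesis ip (zs : nat -> H) (a : nat -> R[i]) (t : H) : Prop :=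
  hcvg ip (fun N => \sum_(0 <= n < N) a n *: zs n) t.

Definition K_minimal ip (zs : nat -> H) : Prop :=
  forall (a b : nat -> R[i]) (t : H), l2seq a -> l2seq b ->
    synthesis ip zs a t -> synthesis ip zs b t -> a = b.

End Hilbert.

Definition dsum_ip (R : realType) (H1 H2 : lmodType R[i])
  (ip1 : H1 -> H1 -> R[i]) (ip2 : H2 -> H2 -> R[i]) : (H1 * H2)%type -> (H1 * H2)%type -> R[i] :=
  fun u v => ip1 u.1 v.1 + ip2 u.2 v.2.

Definition dsum_op (H1 H2 : Type) (K : H1 -> H1) (L : H2 -> H2) : (H1 * H2)%type -> (H1 * H2)%type :=
  fun u => (K u.1, L u.2).

(* Main.v *)
Require Import Defs.
From mathcomp Require Import all_boot all_order all_algebra.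
From mathcomp Require Import all_classical all_reals all_analysis.
From mathcomp Require Import complex.
From mathcomp Require Import ring lra.
Import Order.TTheory GRing.Theory Num.Theory.
Local Open Scope ring_scope.
Local Open Scope complex_scope.

Module Helpers.
Set Implicit Arguments. Unset Strict Implicit. Unset Printing Implicit Defensive.
Import numFieldNormedType.Exports.
Local Open Scope classical_set_scope.
Local Open Scope ring_scope.
Local Open Scope complex_scope.

Local Notation Re := complex.Re.
Local Notation Im := complex.Im.

Lemma sq_le (F : realFieldType) (p r : F) : r ^+ 2 <= p ^+ 2 -> 0 <= p -> r <= p.
Proof. move=> h1 h2. nra. Qed.

Lemma adjb (F : realFieldType) (t k h m : F) : 0 <= t -> 0 <= h -> 0 <= m ->
  t ^+ 2 <= k * h -> k <= m * t -> t <= m * h.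
Proof.
move=> t0 h0 m0 H1 H2.
have h3 : t * t <= (m * h) * t.
  by rewrite -expr2 (le_trans H1) // mulrAC ler_wpM2r.
have mh : 0 <= m * h by apply: mulr_ge0.
nra.
Qed.

Lemma fin_step (F : realFieldType) (hr hz k q eps : F) : 0 <= hr -> 0 <= hz -> 0 <= k ->
  0 < eps -> hr ^+ 2 <= hz * k -> k < q -> q * (hz + 1) = eps ^+ 2 -> hr < eps.
Proof.
move=> hr0 hz0 k0 e0 h1 h2 h3.
have h4 : hz * k <= hz * q := ler_wpM2l hz0 (ltW h2).
have h5 : hr ^+ 2 < eps ^+ 2 by rewrite -h3; nra.
nra.
Qed.

Lemma sq_lt (F : realFieldType) (k q : F) : 0 <= k -> 0 < q -> k ^+ 2 < q ^+ 2 -> k < q.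
Proof. move=> *; nra. Qed.

Lemma unique_step (F : realFieldType) (h eps p : F) : 0 <= h -> h < eps ->
  eps * (p + 1) = p -> 0 < p -> p <= h ^+ 2 -> False.
Proof.
move=> h0 he ep p0 ph.
have e0 : 0 < eps by apply: le_lt_trans he.
have e1 : eps < 1 by nra.
have h2 : h ^+ 2 < eps ^+ 2 by nra.
have e2 : eps ^+ 2 < eps by nra.
have e3 : eps < p by nra.
lra.
Qed.

Lemma sq_bound (F : realFieldType) (t h D : F) : 0 <= t -> 0 <= h -> 0 <= D ->
  t <= D * h -> t ^+ 2 <= (D ^+ 2 + 1) * h ^+ 2.
Proof. move=> t0 h0 D0 th. have : t ^+ 2 <= (D * h) ^+ 2 by rewrite lerXn2r // ?nnegrE // mulr_ge0. 
rewrite exprMn => h1. have : 0 <= h ^+ 2 by exact: sqr_ge0. nra. Qed.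

Lemma sum_bound (F : realFieldType) (B1 B2 a b x y : F) : 0 < B1 -> 0 < B2 ->
  a <= B1 * x -> b <= B2 * y -> 0 <= x -> 0 <= y -> a + b <= (B1 + B2) * (x + y).
Proof. move=> *; nra. Qed.

Section Cx.
Variable R : realType.
Implicit Types c d : R[i].

Lemma ReD c d : Re (c + d) = Re c + Re d. Proof. by case: c => a b; case: d => e f; simpc. Qed.
Lemma ImD c d : Im (c + d) = Im c + Im d. Proof. by case: c => a b; case: d => e f; simpc. Qed.
Lemma ReN c : Re (- c) = - Re c. Proof. by case: c => a b; simpc. Qed.
Lemma ReJ c : Re (conjc c) = Re c. Proof. by case: c. Qed.

Lemma mulcJ_cnorm2 c : c * conjc c = (cnorm2 c)%:C.
Proof. case: c => a b; rewrite /cnorm2 /=; simpc. apply/eqP; rewrite eq_complex /=. apply/andP; split; apply/eqP; ring. Qed.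

Lemma cnorm2_ge0 c : 0 <= cnorm2 c.
Proof. rewrite /cnorm2; exact: addr_ge0 (sqr_ge0 _) (sqr_ge0 _). Qed.

Lemma cnorm2_eq0 c : cnorm2 c = 0 -> c = 0.
Proof. case: c => a b; rewrite /cnorm2 /= => h.
have ha : a = 0 by apply/eqP; rewrite -sqrf_eq0; apply/eqP; nra.
have hb : b = 0 by apply/eqP; rewrite -sqrf_eq0; apply/eqP; nra.
by rewrite ha hb. Qed.

Lemma cnorm20 : cnorm2 0 = 0 :> R.
Proof. by rewrite /cnorm2 /= expr0n /= addr0. Qed.

Lemma cnorm2N c : cnorm2 (- c) = cnorm2 c.
Proof. by case: c => a b; rewrite /cnorm2 /= !sqrrN. Qed.

Lemma Re_le_cnorm2 c : Re c ^+ 2 <= cnorm2 c.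
Proof. rewrite /cnorm2; have := sqr_ge0 (Im c); lra. Qed.

Lemma ge0_realC c : 0 <= c -> c = (Re c)%:C /\ 0 <= Re c.
Proof. rewrite lecE /= => /andP[/eqP h1 h2]; split => //. by case: c h1 h2 => a b /= ->. Qed.

Lemma conjcD c d : conjc (c + d) = conjc c + conjc d. Proof. exact: rmorphD. Qed.
Lemma conjcN c : conjc (- c) = - conjc c. Proof. exact: rmorphN. Qed.
Lemma conjcB c d : conjc (c - d) = conjc c - conjc d. Proof. exact: rmorphB. Qed.
Lemma conjcM c d : conjc (c * d) = conjc c * conjc d. Proof. exact: rmorphM. Qed.
Lemma realcM (a b : R) : (a * b)%:C = a%:C * b%:C :> R[i]. Proof. exact: rmorphM. Qed.
Lemma realcB (a b : R) : (a - b)%:C = a%:C - b%:C :> R[i]. Proof. exact: rmorphB. Qed.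
Lemma conjcR (a : R) : conjc (a%:C) = a%:C :> R[i].
Proof. by apply/eqP; rewrite eq_complex /= oppr0 !eqxx. Qed.
End Cx.

Section IP.
Variable R : realType.
Variable H : lmodType R[i].
Variable ip : H -> H -> R[i].
Hypothesis hip : is_inner_product ip.

Lemma ipDl x y z : ip (x + y) z = ip x z + ip y z.
Proof. case: hip => h _ _ _. by have := h 1 x y z; rewrite scale1r mul1r. Qed.

Lemma ip0l z : ip 0 z = 0.
Proof. apply: (addrI (ip 0 z)); by rewrite -ipDl !addr0. Qed.

Lemma ipZl a x z : ip (a *: x) z = a * ip x z.
Proof. case: hip => h _ _ _. by have := h a x 0 z; rewrite addr0 ip0l addr0. Qed.

Lemma ipNl x z : ip (- x) z = - ip x z.
Proof. by rewrite -scaleN1r ipZl mulN1r. Qed.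

Lemma ipBl x y z : ip (x - y) z = ip x z - ip y z.
Proof. by rewrite ipDl ipNl. Qed.

Lemma ipC x y : ip x y = conjc (ip y x).
Proof. by case: hip => _ h _ _; rewrite h. Qed.

Lemma ip0r z : ip z 0 = 0.
Proof. by rewrite ipC ip0l conjc0. Qed.

Lemma ipDr x y z : ip z (x + y) = ip z x + ip z y.
Proof. by rewrite ipC ipDl conjcD [ip z x]ipC [ip z y]ipC. Qed.

Lemma ipZr a x z : ip z (a *: x) = conjc a * ip z x.
Proof. by rewrite ipC ipZl conjcM [ip z x]ipC. Qed.

Lemma ipNr x z : ip z (- x) = - ip z x.
Proof. by rewrite ipC ipNl conjcN [ip z x]ipC. Qed.

Lemma ipBr x y z : ip z (x - y) = ip z x - ip z y.
Proof. by rewrite ipDr ipNr. Qed.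

Lemma ip_suml I (r : seq I) (P : pred I) (F : I -> H) z :
  ip (\sum_(i <- r | P i) F i) z = \sum_(i <- r | P i) ip (F i) z.
Proof. exact: (big_morph (fun v => ip v z) (fun a b => ipDl a b z) (ip0l z)). Qed.

Lemma ipxxE x : ip x x = (Re (ip x x))%:C /\ 0 <= Re (ip x x).
Proof. case: hip => _ _ h _; exact: ge0_realC. Qed.

Lemma Re_ipxx_ge0 x : 0 <= Re (ip x x). Proof. by case: (ipxxE x). Qed.

Lemma hnorm_ge0 x : 0 <= hnorm ip x. Proof. exact: sqrtr_ge0. Qed.

Lemma hnorm2 x : hnorm ip x ^+ 2 = Re (ip x x).
Proof. by rewrite /hnorm sqr_sqrtr // Re_ipxx_ge0. Qed.

Lemma Re_ipxx_eq0 x : Re (ip x x) = 0 -> x = 0.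
Proof. move=> h; case: hip => _ _ _ h0; apply: h0. by case: (ipxxE x) => -> _; rewrite h. Qed.

Lemma hnorm_eq0 x : hnorm ip x = 0 -> x = 0.
Proof. move=> h; apply: Re_ipxx_eq0; by rewrite -hnorm2 h expr0n. Qed.

Lemma hnorm0 : hnorm ip 0 = 0.
Proof. by rewrite /hnorm ip0l /= sqrtr0. Qed.

Lemma hnorm_opp x : hnorm ip (- x) = hnorm ip x.
Proof. by rewrite /hnorm ipNl ipNr opprK. Qed.

Lemma CS a b : cnorm2 (ip a b) <= hnorm ip a ^+ 2 * hnorm ip b ^+ 2.
Proof.
rewrite !hnorm2.
have [eA A0] := ipxxE a; have [eB B0] := ipxxE b.
move: eA A0 eB B0.
set c := ip a b; set A1 := Re (ip a a); set B1 := Re (ip b b) => eA A0 eB B0.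
have [B1_0|B1_pos] := eqVneq B1 0.
  have b0 : b = 0 by apply: Re_ipxx_eq0.
  by rewrite /c b0 ip0r cnorm20 B1_0 mulr0.
set v := ip b b *: a - c *: b.
have hbv : ip b v = 0.
  rewrite /v ipBr !ipZr -/c [ip b a]ipC -/c.
  by rewrite eB conjcR mulrC subrr.
have hav : ip a v = ((B1 * A1 - cnorm2 c))%:C.
  by rewrite /v ipBr !ipZr -/c eA eB conjcR [conjc c * c]mulrC mulcJ_cnorm2 realcB realcM.
have hvv : ip v v = (B1 * (B1 * A1 - cnorm2 c))%:C.
  rewrite {1}/v ipBl !ipZl hbv mulr0 subr0 hav eB.
  by rewrite -realcM.
have := Re_ipxx_ge0 v; rewrite hvv /=.
have Bp : 0 < B1 by rewrite lt_def B1_pos B0.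
move=> h. nra.
Qed.

Lemma Re_ip_le a b : Re (ip a b) <= hnorm ip a * hnorm ip b.
Proof.
have h := le_trans (Re_le_cnorm2 _) (CS a b).
rewrite -exprMn in h.
have p0 : 0 <= hnorm ip a * hnorm ip b by apply: mulr_ge0; apply: hnorm_ge0.
exact: sq_le h p0.
Qed.

Lemma NRe_ip_le a b : - Re (ip a b) <= hnorm ip a * hnorm ip b.
Proof.
have h := le_trans (Re_le_cnorm2 _) (CS a b).
rewrite -exprMn -sqrrN in h.
have p0 : 0 <= hnorm ip a * hnorm ip b by apply: mulr_ge0; apply: hnorm_ge0.
exact: sq_le h p0.
Qed.

Lemma adj0 (K Kadj : H -> H) : is_adjoint ip K Kadj -> Kadj 0 = 0.
Proof.
move=> adj; apply: Re_ipxx_eq0.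
by rewrite -adj ip0r.
Qed.

Lemma adj_bound (K Kadj : H -> H) : bounded_op ip K -> is_adjoint ip K Kadj ->
  exists M, 0 <= M /\ forall w, hnorm ip (Kadj w) <= M * hnorm ip w.
Proof.
move=> [_ [M hM]] adj.
exists `|M|; split => // w.
set t := hnorm ip (Kadj w).
have t0 : 0 <= t := hnorm_ge0 _.
have hw := hnorm_ge0 w.
have h1 : t ^+ 2 <= hnorm ip (K (Kadj w)) * hnorm ip w.
  by rewrite /t hnorm2 -adj; apply: Re_ip_le.
have h2 : hnorm ip (K (Kadj w)) <= `|M| * t.
  apply: le_trans (hM _) _; apply: ler_wpM2r => //; exact: ler_norm.
have hM0 : 0 <= `|M| := normr_ge0 _.
exact: adjb t0 hw hM0 h1 h2.
Qed.

Section Orth.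
Variable e : nat -> H.
Hypothesis orth : orthonormal_system ip e.

Lemma ip_psum (a : nat -> R[i]) N n :
  ip (\sum_(0 <= k < N) a k *: e k) (e n) = if (n < N)%N then a n else 0.
Proof.
elim: N => [|N IH]; first by rewrite big_geq // ip0l.
rewrite big_nat_recr //= ipDl IH ipZl orth.
case: (ltngtP n N) => [nN|Nn|->].
- by rewrite ltnS ltnW // mulr0 addr0.
- by rewrite ltnS leqNgt Nn /= mulr0 addr0.
- by rewrite ltnSn mulr1 add0r.
Qed.

Lemma hnorm_e n : hnorm ip (e n) = 1.
Proof. by rewrite /hnorm orth eqxx /= sqrtr1. Qed.

Section Dual.
Variables Kop Kadj : H -> H.
Hypothesis adj : is_adjoint ip Kop Kadj.
Hypothesis pars : parseval_K_frame ip Kadj e.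

Lemma tail_eq (a : nat -> R[i]) N :
  (\sum_(0 <= n <oo) (cnorm2 (if (n < N)%N then 0 else - a n))%:E =
   \sum_(N <= n <oo) (cnorm2 (a n))%:E)%E.
Proof.
apply/esym; rewrite eseries_cond eseries_mkcondr.
apply: eq_eseriesr => n _.
by case: ltnP => //= _; rewrite ?cnorm20 ?cnorm2N.
Qed.

Lemma dual_cvg z :
  hcvg ip (fun N => \sum_(0 <= n < N) ip z (Kadj (e n)) *: e n) (Kop z).
Proof.
set w := Kop z.
set a := fun n => ip w (e n).
have -> : (fun N => \sum_(0 <= n < N) ip z (Kadj (e n)) *: e n) =
          (fun N => \sum_(0 <= n < N) a n *: e n).
  by apply/funext => N; apply: eq_bigr => n _; rewrite /a /w adj.
set r := fun N => \sum_(0 <= n < N) a n *: e n - w.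
have hr N n : ip (r N) (e n) = if (n < N)%N then 0 else - a n.
  rewrite /r ipBl ip_psum //; case: ifP => _; by rewrite ?subrr ?sub0r.
have hrr N : Re (ip (r N) (r N)) = - Re (ip z (Kadj (r N))).
  rewrite -adj -/w {1}/r ipBl ip_suml.
  rewrite big1_seq ?sub0r ?ReN // => k /andP[_]; rewrite mem_index_iota => /andP[_ kN].
  by rewrite ipZl ipC hr kN conjc0 mulr0.
pose t N := hnorm ip (Kadj (r N)) ^+ 2.
have htE N : ((t N)%:E = \sum_(N <= n <oo) (cnorm2 (a n))%:E)%E.
  rewrite /t pars /frame_sum -(tail_eq a N).
  by apply: eq_eseriesr => n _; rewrite hr.
have fin : (\sum_(0 <= n <oo) (cnorm2 (a n))%:E < +oo)%E.
  by rewrite /a -/(frame_sum ip e w) -pars ltry.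
have tcvg : (fun N => (t N)%:E) @ \oo --> (0%:E : \bar R).
  rewrite (_ : (fun N => _) = (fun N => \sum_(N <= n <oo) (cnorm2 (a n))%:E)%E).
    apply: nneseries_tail_cvg fin _ => k _; rewrite lee_fin; exact: cnorm2_ge0.
  by apply/funext => N; rewrite htE.
have tcvg' : t @ \oo --> (0 : R) by exact: (fine_cvg tcvg).
apply/cvgr0Pnorm_lt => eps eps0.
set hz := hnorm ip z.
have hz0 : 0 <= hz := hnorm_ge0 z.
pose q := eps ^+ 2 / (hz + 1).
have hz1 : 0 < hz + 1 := ltr_wpDl hz0 ltr01.
have q0 : 0 < q by rewrite divr_gt0 ?exprn_gt0.
have qE : q * (hz + 1) = eps ^+ 2 by rewrite /q divfK // gt_eqF.
have q20 : 0 < q ^+ 2 by rewrite exprn_gt0.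
near=> N.
have hN : `|t N| < q ^+ 2 by near: N; exact: cvgr0_norm_lt _ tcvg' _ q20.
set k := hnorm ip (Kadj (r N)).
have k0 : 0 <= k := hnorm_ge0 _.
have hk : k < q.
  rewrite /t -/k ger0_norm ?exprn_ge0 // in hN.
  exact: sq_lt k0 q0 hN.
have hrn : hnorm ip (r N) ^+ 2 <= hz * k by rewrite hnorm2 hrr; exact: NRe_ip_le.
rewrite ger0_norm ?hnorm_ge0 //.
have hr0 := hnorm_ge0 (r N).
exact: fin_step hr0 hz0 k0 eps0 hrn hk qE.
Unshelve. all: by end_near.
Qed.

Lemma dual_bessel : (exists B, 0 < B /\ forall z, hnorm ip (Kadj (Kop z)) ^+ 2 <= B * hnorm ip z ^+ 2) ->
  bessel ip (fun n => Kadj (e n)).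
Proof.
move=> [B [B0 hB]]; exists B; split => // z.
have -> : frame_sum ip (fun n => Kadj (e n)) z = frame_sum ip e (Kop z).
  by apply: eq_eseriesr => n _; rewrite adj.
by rewrite -pars lee_fin.
Qed.

Lemma dual_unique g :
  (forall z, hcvg ip (fun N => \sum_(0 <= n < N) ip z (g n) *: e n) (Kop z)) ->
  g = fun n => Kadj (e n).
Proof.
move=> hg; apply/funext => m.
have key z : ip z (g m) = ip z (Kadj (e m)).
  rewrite -adj.
  set c := ip z (g m) - ip (Kop z) (e m).
  suff : c = 0 by move/eqP; rewrite subr_eq0 => /eqP.
  apply: cnorm2_eq0.
  set p := cnorm2 c.
  have p0 : 0 <= p := cnorm2_ge0 c.
  have [//|pp] := eqVneq p 0.
  have pp' : 0 < p by rewrite lt_def pp p0.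
  pose eps := p / (p + 1).
  have p1 : 0 < p + 1 by apply: ltr_wpDl p0 ltr01.
  have eps0 : 0 < eps by rewrite divr_gt0.
  have epsE : eps * (p + 1) = p by rewrite /eps divfK // gt_eqF.
  case: (cvgr0_norm_lt _ (hg z) _ eps0) => N _ HN.
  have := HN (maxn N m.+1) (leq_maxl _ _).
  rewrite /= ger0_norm ?hnorm_ge0 // => hlt.
  set s := \sum_(0 <= k < maxn N m.+1) ip z (g k) *: e k in hlt.
  have hc : c = ip (s - Kop z) (e m).
    by rewrite ipBl /s ip_psum // (leq_trans (ltnSn m) (leq_maxr _ _)).
  have := CS (s - Kop z) (e m).
  rewrite -hc -/p hnorm_e // expr1n mulr1 => hcs.
  exfalso; exact: unique_step (hnorm_ge0 _) hlt epsE pp' hcs.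
apply/eqP; rewrite -subr_eq0; apply/eqP; apply: Re_ipxx_eq0.
by rewrite ipBr !key subrr.
Qed.

End Dual.
End Orth.

End IP.

Lemma comp_bound (R : realType) (H : lmodType R[i]) (ip : H -> H -> R[i]) (K Kadj : H -> H) :
  is_inner_product ip -> bounded_op ip K -> is_adjoint ip K Kadj ->
  exists B, 0 < B /\ forall u, hnorm ip (Kadj (K u)) ^+ 2 <= B * hnorm ip u ^+ 2.
Proof.
move=> hip bK aK.
have [C [C0 hC]] := adj_bound hip bK aK.
case: (bK) => _ [M hM].
exists ((C * `|M|) ^+ 2 + 1); split; first by rewrite ltr_wpDl ?sqr_ge0.
move=> u; apply: sq_bound; [exact: hnorm_ge0|exact: hnorm_ge0|by rewrite mulr_ge0|].
apply: le_trans (hC _) _; rewrite -mulrA; apply: ler_wpM2l => //.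
apply: le_trans (hM _) _; apply: ler_wpM2r; [exact: hnorm_ge0|exact: ler_norm].
Qed.

Lemma adj_sq_bound (R : realType) (H : lmodType R[i]) (ip : H -> H -> R[i]) (K Kadj : H -> H) :
  is_inner_product ip -> bounded_op ip K -> is_adjoint ip K Kadj ->
  exists B, 0 < B /\ forall u, hnorm ip (Kadj u) ^+ 2 <= B * hnorm ip u ^+ 2.
Proof.
move=> hip bK aK.
have [C [C0 hC]] := adj_bound hip bK aK.
exists (C ^+ 2 + 1); split; first by rewrite ltr_wpDl ?sqr_ge0.
by move=> u; apply: sq_bound; [exact: hnorm_ge0|exact: hnorm_ge0|done|].
Qed.

Lemma nneseries_term0 (R : realType) (f : nat -> R) : (forall k, 0 <= f k) ->
  (\sum_(0 <= k <oo) (f k)%:E = 0)%E -> forall n, f n = 0.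
Proof.
move=> f0 hs n; apply/eqP; rewrite eq_le f0 andbT -lee_fin.
have h2 : (\sum_(0 <= i < n.+1) (f i)%:E <= \sum_(0 <= k <oo) (f k)%:E)%E.
  by apply: nneseries_lim_ge => k _ _; rewrite lee_fin.
rewrite hs in h2.
apply: le_trans h2.
rewrite big_nat_recr //=; apply: leeDr; by apply: sume_ge0 => k _; rewrite lee_fin.
Qed.

Section Dsum.
Variable R : realType.
Variables H1 H2 : lmodType R[i].
Variables (ip1 : H1 -> H1 -> R[i]) (ip2 : H2 -> H2 -> R[i]).
Hypotheses (hip1 : is_inner_product ip1) (hip2 : is_inner_product ip2).

Lemma dsum_inner : is_inner_product (dsum_ip ip1 ip2).
Proof.
split.
- move=> a [x1 x2] [y1 y2] [z1 z2]; rewrite /dsum_ip /=.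
  by rewrite !(ipDl hip1) !(ipDl hip2) !(ipZl hip1) !(ipZl hip2) mulrDr addrACA.
- move=> [x1 x2] [y1 y2]; rewrite /dsum_ip /=.
  by rewrite conjcD [ip1 y1 x1](ipC hip1) [ip2 y2 x2](ipC hip2).
- move=> [x1 x2]; rewrite /dsum_ip /=.
  by apply: addr_ge0; [case: hip1|case: hip2].
- move=> [x1 x2]; rewrite /dsum_ip /= => /eqP.
  case: hip1 => _ _ g1 d1; case: hip2 => _ _ g2 d2.
  rewrite paddr_eq0 // => /andP[/eqP h1 /eqP h2].
  by rewrite (d1 _ h1) (d2 _ h2).
Qed.

Lemma dsum_adj (K Kadj : H1 -> H1) (L Ladj : H2 -> H2) :
  is_adjoint ip1 K Kadj -> is_adjoint ip2 L Ladj ->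
  is_adjoint (dsum_ip ip1 ip2) (dsum_op K L) (dsum_op Kadj Ladj).
Proof. by move=> a1 a2 [x1 x2] [y1 y2]; rewrite /dsum_ip /dsum_op /= a1 a2. Qed.

Lemma hnorm_dsum2 u : hnorm (dsum_ip ip1 ip2) u ^+ 2 = hnorm ip1 u.1 ^+ 2 + hnorm ip2 u.2 ^+ 2.
Proof. by rewrite (hnorm2 dsum_inner) (hnorm2 hip1) (hnorm2 hip2) /dsum_ip ReD. Qed.

Lemma hnorm_dsum_fst u : hnorm ip1 u.1 <= hnorm (dsum_ip ip1 ip2) u.
Proof.
apply: sq_le; last exact: hnorm_ge0.
by rewrite hnorm_dsum2 lerDl sqr_ge0.
Qed.

Lemma hnorm_dsum_snd u : hnorm ip2 u.2 <= hnorm (dsum_ip ip1 ip2) u.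
Proof.
apply: sq_le; last exact: hnorm_ge0.
by rewrite hnorm_dsum2 lerDr sqr_ge0.
Qed.

Lemma hcvg_fst s l : hcvg (dsum_ip ip1 ip2) s l -> hcvg ip1 (fun N => (s N).1) l.1.
Proof.
move=> h; apply/cvgr0Pnorm_lt => eps e0.
near=> N.
have hN : `|hnorm (dsum_ip ip1 ip2) (s N - l)| < eps by near: N; exact: cvgr0_norm_lt _ h _ e0.
rewrite ger0_norm ?hnorm_ge0 // in hN *.
rewrite ger0_norm ?hnorm_ge0 //.
have h' := hnorm_dsum_fst (s N - l); simpl in h'; exact: le_lt_trans h' hN.
Unshelve. all: by end_near.
Qed.

Lemma hcvg_snd s l : hcvg (dsum_ip ip1 ip2) s l -> hcvg ip2 (fun N => (s N).2) l.2.
Proof.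
move=> h; apply/cvgr0Pnorm_lt => eps e0.
near=> N.
have hN : `|hnorm (dsum_ip ip1 ip2) (s N - l)| < eps by near: N; exact: cvgr0_norm_lt _ h _ e0.
rewrite ger0_norm ?hnorm_ge0 // in hN *.
rewrite ger0_norm ?hnorm_ge0 //.
have h' := hnorm_dsum_snd (s N - l); simpl in h'; exact: le_lt_trans h' hN.
Unshelve. all: by end_near.
Qed.

End Dsum.

Lemma sum_fst (R : realType) (H1 H2 : lmodType R[i]) (a : nat -> R[i]) (x : nat -> H1) (y : nat -> H2) N :
  (\sum_(0 <= n < N) a n *: ((x n, y n) : (H1 * H2)%type)).1 = \sum_(0 <= n < N) a n *: x n.
Proof. exact: (big_morph fst (fun _ _ => erefl) erefl). Qed.

Lemma sum_snd (R : realType) (H1 H2 : lmodType R[i]) (a : nat -> R[i]) (x : nat -> H1) (y : nat -> H2) N :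
  (\sum_(0 <= n < N) a n *: ((x n, y n) : (H1 * H2)%type)).2 = \sum_(0 <= n < N) a n *: y n.
Proof. exact: (big_morph snd (fun _ _ => erefl) erefl). Qed.

Lemma hcvg_ext (R : realType) (H : lmodType R[i]) (ip : H -> H -> R[i]) (s t : nat -> H) l :
  s =1 t -> hcvg ip s l -> hcvg ip t l.
Proof. by move=> /funext ->. Qed.

Lemma hcvg_ext2 (R : realType) (H : lmodType R[i]) (ip : H -> H -> R[i]) (s t : nat -> H) l l' :
  s =1 t -> l = l' -> hcvg ip s l -> hcvg ip t l'.
Proof. by move=> /funext -> ->. Qed.

Lemma lin0_op (R : realType) (H : lmodType R[i]) (ip : H -> H -> R[i]) (K : H -> H) :
  bounded_op ip K -> K 0 = 0.
Proof.
case=> lin _; have := lin 1 0 0; rewrite scaler0 addr0 scale1r => h.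
by apply: (addrI (K 0)); rewrite -h addr0.
Qed.

Lemma hcvg_const_eq0 (R : realType) (H : lmodType R[i]) (ip : H -> H -> R[i]) (s : nat -> H) l :
  is_inner_product ip -> (forall N, s N = 0) -> hcvg ip s l -> l = 0.
Proof.
move=> hip s0 h; apply: (hnorm_eq0 hip).
have h0 : 0 <= hnorm ip l by apply: hnorm_ge0.
have [//|ln] := eqVneq (hnorm ip l) 0.
have lp : 0 < hnorm ip l by rewrite lt_def ln h0.
case: (cvgr0_norm_lt _ h _ lp) => N _ HN.
have := HN N (leqnn N); rewrite /= s0 sub0r (hnorm_opp hip) ger0_norm //.
by rewrite ltxx.
Qed.

End Helpers.
Import Helpers.

Theorem proposition2p23 (R : realType)
  (H1 H2 : lmodType R[i])
  (ip1 : H1 -> H1 -> R[i]) (ip2 : H2 -> H2 -> R[i])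
  (hH1 : is_hilbert ip1) (sH1 : separable ip1)
  (hH2 : is_hilbert ip2) (sH2 : separable ip2)
  (K Kadj : H1 -> H1) (L Ladj : H2 -> H2)
  (bK : bounded_op ip1 K) (aK : is_adjoint ip1 K Kadj)
  (bL : bounded_op ip2 L) (aL : is_adjoint ip2 L Ladj)
  (x : nat -> H1) (y : nat -> H2) :
  let ip := dsum_ip ip1 ip2 in
  let KL := dsum_op K L in
  let KLadj := dsum_op Kadj Ladj in
  let xy := fun n => (x n, y n) in
  (* (i) *)
  ((forall u, K u = 0) -> ~ (forall v, L v = 0) ->
     (K_orthonormal_basis ip KLadj xy <->
      (forall n, x n = 0) /\ K_orthonormal_basis ip2 Ladj y)) /\
  (* (ii) *)
  (~ (forall u, K u = 0) -> (forall v, L v = 0) ->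
     (K_orthonormal_basis ip KLadj xy <->
      (forall n, y n = 0) /\ K_orthonormal_basis ip1 Kadj x)) /\
  (* (iii) *)
  (~ (forall u, K u = 0) -> ~ (forall v, L v = 0) ->
     K_orthonormal_basis ip KLadj xy ->
     [/\ (* (a) *)
         K_dual_frame ip KL xy (fun n => KLadj (xy n)) /\
         (forall g : nat -> (H1 * H2)%type, K_dual_frame ip KL xy g ->
            g = (fun n => KLadj (xy n))),
         (* (b) *)
         [/\ K_frame ip1 Kadj x, ~ K_minimal ip1 x &
             K_dual_frame ip1 K x (fun n => Kadj (x n))] &
         (* (c) *)
         [/\ K_frame ip2 Ladj y, ~ K_minimal ip2 y &
             K_dual_frame ip2 L y (fun n => Ladj (y n))]]).
Proof.
move=> ip KL KLadj xy.
have hip1 : is_inner_product ip1 by case: hH1.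
have hip2 : is_inner_product ip2 by case: hH2.
have hipd : is_inner_product ip := dsum_inner hip1 hip2.
have adjd : is_adjoint ip KL KLadj := dsum_adj aK aL.
have Kadj0 : Kadj 0 = 0 := adj0 hip1 aK.
have Ladj0 : Ladj 0 = 0 := adj0 hip2 aL.
have ipE a b c d : ip (a, b) (c, d) = ip1 a c + ip2 b d by [].
have hn2 a b : hnorm ip (a, b) ^+ 2 = hnorm ip1 a ^+ 2 + hnorm ip2 b ^+ 2 := hnorm_dsum2 hip1 hip2 (a, b).
split; [|split].
-
  move=> K0 _.
  have Kadj00 u : Kadj u = 0.
    by apply: (Re_ipxx_eq0 hip1); rewrite -aK K0 (ip0l hip1).
  split.
  + move=> [orth pars].
    have xn0 n : x n = 0.
      have h := pars (x n, 0).
      rewrite /KLadj /dsum_op /= Kadj00 Ladj0 in h.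
      rewrite hn2 (hnorm0 hip1) (hnorm0 hip2) expr0n /= addr0 in h.
      have := nneseries_term0 (f := fun k => cnorm2 (ip (x n, 0) (xy k))) (fun k => cnorm2_ge0 _) (esym h) n.
      rewrite /xy ipE (ip0l hip2) addr0 => /cnorm2_eq0.
      by move=> h0; apply: (Re_ipxx_eq0 hip1); rewrite h0.
    split => //; split.
      move=> n m; have := orth n m; by rewrite /xy ipE !xn0 (ip0l hip1) add0r.
    move=> z; have := pars (0, z).
    rewrite /KLadj /dsum_op /= Kadj00 hn2 (hnorm0 hip1) expr0n add0r => ->.
    by rewrite /frame_sum; apply: eq_eseriesr => k _; rewrite /xy ipE (ip0l hip1) add0r.
  + move=> [xn0 [orth2 pars2]]; split.
      move=> n m; rewrite /xy ipE !xn0 (ip0l hip1) add0r; exact: orth2.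
    move=> [u v]; rewrite /KLadj /dsum_op /= hn2 Kadj00 (hnorm0 hip1) expr0n add0r pars2 /frame_sum.
    by apply: eq_eseriesr => k _; rewrite /xy ipE xn0 (ip0r hip1) add0r.
-
  move=> _ L0.
  have Ladj00 u : Ladj u = 0.
    by apply: (Re_ipxx_eq0 hip2); rewrite -aL L0 (ip0l hip2).
  split.
  + move=> [orth pars].
    have yn0 n : y n = 0.
      have h := pars (0, y n).
      rewrite /KLadj /dsum_op /= Ladj00 Kadj0 in h.
      rewrite hn2 (hnorm0 hip1) (hnorm0 hip2) expr0n /= addr0 in h.
      have := nneseries_term0 (f := fun k => cnorm2 (ip (0, y n) (xy k))) (fun k => cnorm2_ge0 _) (esym h) n.
      rewrite /xy ipE (ip0l hip1) add0r => /cnorm2_eq0.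
      by move=> h0; apply: (Re_ipxx_eq0 hip2); rewrite h0.
    split => //; split.
      move=> n m; have := orth n m; by rewrite /xy ipE !yn0 (ip0l hip2) addr0.
    move=> z; have := pars (z, 0).
    rewrite /KLadj /dsum_op /= Ladj00 hn2 (hnorm0 hip2) expr0n addr0 => ->.
    by rewrite /frame_sum; apply: eq_eseriesr => k _; rewrite /xy ipE (ip0l hip2) addr0.
  + move=> [yn0 [orth1 pars1]]; split.
      move=> n m; rewrite /xy ipE !yn0 (ip0l hip2) addr0; exact: orth1.
    move=> [u v]; rewrite /KLadj /dsum_op /= hn2 Ladj00 (hnorm0 hip2) expr0n addr0 pars1 /frame_sum.
    by apply: eq_eseriesr => k _; rewrite /xy ipE yn0 (ip0r hip2) addr0.
-
  move=> Kn0 Ln0 [orth pars].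
  have [B1 [B10 hB1]] := comp_bound hip1 bK aK.
  have [B2 [B20 hB2]] := comp_bound hip2 bL aL.
  have hBd : exists B, 0 < B /\ forall z, hnorm ip (KLadj (KL z)) ^+ 2 <= B * hnorm ip z ^+ 2.
    exists (B1 + B2); split; first exact: addr_gt0.
    move=> [u v]; rewrite /KLadj /KL /dsum_op /= !hn2.
    exact: sum_bound B10 B20 (hB1 u) (hB2 v) (sqr_ge0 _) (sqr_ge0 _).
  have dcvg := dual_cvg hipd orth adjd pars.
  have dbes := dual_bessel adjd pars hBd.
  have [Bd [Bd0 hBes]] := dbes.
  have [C1 [C10 hC1]] := adj_sq_bound hip1 bK aK.
  have [C2 [C20 hC2]] := adj_sq_bound hip2 bL aL.
  have K00 : K 0 = 0 := lin0_op bK.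
  have L00 : L 0 = 0 := lin0_op bL.
  split.
  + split; first by split.
    by move=> g [_ hg]; apply: (dual_unique hipd orth adjd hg).
  + split.
    * exists 1, C1; split => // u.
      have -> : frame_sum ip1 x u = frame_sum ip xy (u, 0).
        by rewrite /frame_sum; apply: eq_eseriesr => k _; rewrite /xy ipE (ip0l hip2) addr0.
      rewrite -pars /KLadj /dsum_op /= hn2 Ladj0 (hnorm0 hip2) expr0n addr0 mul1r lee_fin.
      by split => //; exact: hC1.
    * move=> hmin.
      have [w Lw] : exists w, ~ L w = 0 by apply/existsNP.
      set z := ((0 : H1), w).
      set a := fun n => ip z (KLadj (xy n)).
      have hz := dcvg z.
      have hsyn : synthesis ip1 x a 0.
        apply: (hcvg_ext2 _ K00 (hcvg_fst hip1 hip2 hz)) => N /=.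
        by rewrite /xy sum_fst.
      have hsyn0 : synthesis ip1 x (fun _ => 0) 0.
        rewrite /synthesis /hcvg.
        have -> : (fun N => hnorm ip1 (\sum_(0 <= n < N) 0 *: x n - 0)) = fun _ => 0.
          apply/funext => N; rewrite big1 ?subr0 ?(hnorm0 hip1) // => n _; exact: scale0r.
        by apply/cvgr0Pnorm_lt => eps e0; apply: nearW => N; rewrite normr0.
      have l2a : l2seq a by rewrite /l2seq; apply: le_lt_trans (hBes z) _; exact: ltry.
      have l20 : l2seq (fun _ : nat => 0 : R[i]).
        rewrite /l2seq eseries0 ?lt0y // => i _ _; by rewrite cnorm20.
      have a0 := hmin a (fun _ => 0) 0 l2a l20 hsyn hsyn0.
      apply: Lw; apply: (hcvg_const_eq0 hip2 _ (hcvg_snd hip1 hip2 hz)) => N /=.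
      have a0' n : ip z (KLadj (x n, y n)) = 0 by move: (congr1 (fun f => f n) a0).
      rewrite /xy sum_snd big1 // => n _; by rewrite (a0' n) scale0r.
    * split.
        exists Bd; split => // u.
        have -> : frame_sum ip1 (fun n => Kadj (x n)) u = frame_sum ip (fun n => KLadj (xy n)) (u, 0).
          by rewrite /frame_sum; apply: eq_eseriesr => k _; rewrite /KLadj /dsum_op /xy ipE (ip0l hip2) addr0.
        by apply: le_trans (hBes _) _; rewrite hn2 (hnorm0 hip2) expr0n addr0.
      move=> u.
      apply: (hcvg_ext _ (hcvg_fst hip1 hip2 (dcvg (u, 0)))) => N /=.
      rewrite /xy sum_fst; apply: eq_bigr => n _.
      by rewrite /KLadj /dsum_op ipE (ip0l hip2) addr0.
  + split.
    * exists 1, C2; split => // u.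
      have -> : frame_sum ip2 y u = frame_sum ip xy (0, u).
        by rewrite /frame_sum; apply: eq_eseriesr => k _; rewrite /xy ipE (ip0l hip1) add0r.
      rewrite -pars /KLadj /dsum_op /= hn2 Kadj0 (hnorm0 hip1) expr0n add0r mul1r lee_fin.
      by split => //; exact: hC2.
    * move=> hmin.
      have [w Kw] : exists w, ~ K w = 0 by apply/existsNP.
      set z := (w, (0 : H2)).
      set a := fun n => ip z (KLadj (xy n)).
      have hz := dcvg z.
      have hsyn : synthesis ip2 y a 0.
        apply: (hcvg_ext2 _ L00 (hcvg_snd hip1 hip2 hz)) => N /=.
        by rewrite /xy sum_snd.
      have hsyn0 : synthesis ip2 y (fun _ => 0) 0.
        rewrite /synthesis /hcvg.
        have -> : (fun N => hnorm ip2 (\sum_(0 <= n < N) 0 *: y n - 0)) = fun _ => 0.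
          apply/funext => N; rewrite big1 ?subr0 ?(hnorm0 hip2) // => n _; exact: scale0r.
        by apply/cvgr0Pnorm_lt => eps e0; apply: nearW => N; rewrite normr0.
      have l2a : l2seq a by rewrite /l2seq; apply: le_lt_trans (hBes z) _; exact: ltry.
      have l20 : l2seq (fun _ : nat => 0 : R[i]).
        rewrite /l2seq eseries0 ?lt0y // => i _ _; by rewrite cnorm20.
      have a0 := hmin a (fun _ => 0) 0 l2a l20 hsyn hsyn0.
      apply: Kw; apply: (hcvg_const_eq0 hip1 _ (hcvg_fst hip1 hip2 hz)) => N /=.
      have a0' n : ip z (KLadj (x n, y n)) = 0 by move: (congr1 (fun f => f n) a0).
      rewrite /xy sum_fst big1 // => n _; by rewrite (a0' n) scale0r.
    * split.
        exists Bd; split => // u.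
        have -> : frame_sum ip2 (fun n => Ladj (y n)) u = frame_sum ip (fun n => KLadj (xy n)) (0, u).
          by rewrite /frame_sum; apply: eq_eseriesr => k _; rewrite /KLadj /dsum_op /xy ipE (ip0l hip1) add0r.
        by apply: le_trans (hBes _) _; rewrite hn2 (hnorm0 hip1) expr0n add0r.
      move=> u.
      apply: (hcvg_ext _ (hcvg_snd hip1 hip2 (dcvg (0, u)))) => N /=.
      rewrite /xy sum_snd; apply: eq_bigr => n _.
      by rewrite /KLadj /dsum_op ipE (ip0l hip1) add0r.
Qed.
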